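(* Let $X$ be a Banach space with a right dominant normalized 1-unconditional basis $(x_i)_i$, let $Y=\overline{\mathrm{span}}\{x_i^*\}$, and let $W=(X\oplus X)_\infty$ with basis $(w_i)_i$ given by $w_{2i-1}=(x_i,0)$, $w_{2i}=(0,x_i)$. Let $(e_i)_i$ be the unit vector basis of $J(X)$, $(\bar e_i)_i$ that of $J(W)$, and $s$, $\bar s$ the corresponding summing functionals. Then: (i) $(\bar e_{2i}-\bar e_{2i-1})_i$ is equivalent to $(x_i)_i$ and complemented in $J(W)$ via the projection $Qx=\sum_i\bar e_{2i}^*(x)(\bar e_{2i}-\bar e_{2i-1})$; (ii) $(\bar e_{2i-1})_i$ is equivalent to $(e_i)_i$ and complemented in $J(W)$ via $(I-Q)(x)=\sum_i(\bar e_{2i-1}^*(x)+\bar e_{2i}^*(x))\bar e_{2i-1}$. In particular $\widetilde X=\overline{\mathrm{span}}\{\bar e_{2i}-\bar e_{2i-1}\}$ is an ideal of $J(W)$ isomorphic as a Banach algebra to $X$, $\widetilde{J(X)}=\overline{\mathrm{span}}\{\bar e_{2i-1}\}$ is a subalgebra of $J(W)$ isomorphic as a Banach algebra to $J(X)$, and $J(W)=\widetilde X\oplus\widetilde{J(X)}$. (iii) $(\bar e_{2i}^* )_i$ is equivalent to $(x_i^* )_i$ and complemented in $\mathcal{J}_*(W)$ via $R(f)=\sum_i(f(\bar e_{2i})-f(\bar e_{2i-1}))\bar e_{2i}^*$; (iv) the sequence $(\bar s)^\frown(\bar e_{2i}^*+\bar e_{2i-1}^* )_i$ is equivalent to $(s)^\frown(e_i^*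 )_i$ and complemented in $\mathcal{J}_*(W)$ via the map $S$ with $S(\bar s)=\bar s$ and $S(f)=\sum_if(\bar e_{2i-1})(\bar e_{2i-1}^*+\bar e_{2i}^* )$ for $f\in\overline{\mathrm{span}}\{\bar e_i^*\}$. In particular $\widetilde Y=\overline{\mathrm{span}}\{\bar e_{2i}^*\}$ is an ideal of $\mathcal{J}_*(W)$ isomorphic as a Banach algebra to $Y$, $\widetilde{\mathcal{J}_*(Y)}=\mathbb{R}\bar s\oplus\overline{\mathrm{span}}\{\bar e_{2i-1}^*+\bar e_{2i}^*\}$ is a subalgebra of $\mathcal{J}_*(W)$ isomorphic as a Banach algebra to $\mathcal{J}_*(Y)$, and $\mathcal{J}_*(W)=\widetilde Y\oplus\widetilde{\mathcal{J}_*(Y)}$.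
   Context: An unconditional basis $(x_i)$ is right dominant if there is $C>0$ such that for all $1\le k_1\le m_1<k_2\le m_2<\cdots$ and eventually zero scalars, $\|\sum_ia_{m_i}x_{k_i}\|\le C\|\sum_ia_{m_i}x_{m_i}\|$. For a normalized Schauder basis $(z_i)$ of $Z$, the jamesification $J(Z)$ is the completion of $c_{00}$ under $\|\sum a_ie_i\|=\sup\{\|\sum_n(\sum_{i=k_n}^{m_n}a_i)z_{k_n}\|:1\le k_1\le m_1<k_2\le m_2<\cdots\}$, $(e_i)$ its unit vector basis with biorthogonals $(e_i^* )$, summing functional $s(\sum a_ie_i)=\sum a_i$, and $\mathcal{J}_*(Z)=\mathbb{R}s\oplus\overline{\mathrm{span}}\{e_i^*\}\subset J(Z)^*$. Algebra structures: $X$ and $Y$ use coordinate-wise multiplication with respect to $(x_i)$, $(x_i^* )$; $J(Z)$ uses coordinate-wise multiplication with respect to the difference basis $e_1,e_2-e_1,e_3-e_2,\dots$; $\mathcal{J}_*(Z)$ uses $(w^*\text{-}\sum a_ie_i^* )(w^*\text{-}\sum b_ie_i^* )=w^*\text{-}\sum a_ib_ie_i^*$ with identity $s$. Direct sums are topological direct sums of Banach spaces. *)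

(* Defs.v *)
(* Banach spaces with a basis are modelled by their norm on finitely
   supported coefficient sequences (c00); the spaces themselves are the
   completions. *)
From HB Require Import structures.
From mathcomp Require Import all_boot all_order all_algebra.
From mathcomp Require Import boolp classical_sets reals.
Set Implicit Arguments. Unset Strict Implicit. Unset Printing Implicit Defensive.
Import Order.TTheory GRing.Theory Num.Theory.
Local Open Scope ring_scope.
Local Open Scope classical_set_scope.

Section Defs.
Variable R : realType.
Implicit Types (a b c : nat -> R) (N : (nat -> R) -> R).

Definition vanish (n : nat) a := forall i, (n <= i)%N -> a i = 0.
Definition fsupp a := exists n, vanish n a.
Definition evec (i : nat) : nat -> R := fun j => if j == i then 1 else 0.

Definition c00_norm N :=
  (forall a, fsupp a -> 0 <= N a) /\
  (forall a, fsupp a -> N a = 0 -> forall i, a i = 0) /\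
  (forall (t : R) a, fsupp a -> N (fun i => t * a i) = `|t| * N a) /\
  (forall a b, fsupp a -> fsupp b -> N (fun i => a i + b i) <= N a + N b).

Definition normalized_1uncond N :=
  c00_norm N /\ (forall i, N (evec i) = 1) /\
  (forall a eps, fsupp a -> (forall i, eps i = 1 \/ eps i = -1) ->
     N (fun i => eps i * a i) = N a).

(* sum_{j<n} c_j x_{k_j} as a coefficient sequence *)
Definition place (k : nat -> nat) c (n : nat) : nat -> R :=
  fun i => \sum_(j < n | k j == i) c j.

Definition right_dominant N :=
  exists C : R, 0 < C /\
  forall (n : nat) (k m : nat -> nat) c,
    (forall j, (j < n)%N -> (k j <= m j)%N) ->
    (forall j, (j.+1 < n)%N -> (m j < k j.+1)%N) ->
    N (place k c n) <= C * N (place m c n).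

(* (X (+) X)_oo with w_{2i} = (x_i,0), w_{2i+1} = (0,x_i)  (0-indexed) *)
Definition Wnorm N : (nat -> R) -> R :=
  fun a => Num.max (N (fun i => a i.*2)) (N (fun i => a i.*2.+1)).

(* norm of Y = closed span of the biorthogonals (x_i^* ) in X^* *)
Definition dualnorm N b : R :=
  sup [set r | exists (n : nat) a, vanish n a /\ N a <= 1 /\
                 r = \sum_(i < n) b i * a i].

Fixpoint adm (l : seq (nat * nat)) : Prop :=
  match l with
  | [::] => True
  | p :: l' => (p.1 <= p.2)%N /\
      (match l' with [::] => True | q :: _ => (p.2 < q.1)%N end) /\ adm l'
  end.

(* sum_n (sum_{i=k_n}^{m_n} a_i) z_{k_n} *)
Definition jvec a (l : seq (nat * nat)) : nat -> R :=
  fun j => \sum_(p <- l | p.1 == j) \sum_(p.1 <= i < p.2.+1) a i.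

(* the norm of the jamesification J(Z) on c00 *)
Definition Jnorm N a : R :=
  sup [set r | exists l, adm l /\ r = N (jvec a l)].

(* elements of J_star(Z) = R s (+) span{e_i^*}: pairs (t, b) <-> t s + sum b_i e_i^*,
   with b finitely supported; norm = norm as functional on J(Z) *)
Definition Jsnorm N (f : R * (nat -> R)) : R :=
  sup [set r | exists (n : nat) a, vanish n a /\ Jnorm N a <= 1 /\
                 r = \sum_(i < n) (f.1 + f.2 i) * a i].

(* f(e_k) for f in J_star(Z) *)
Definition fev (f : R * (nat -> R)) (k : nat) : R := f.1 + f.2 k.

(* equivalence of two basic sequences, expressed on coefficients *)
Definition equiv_on (P : (nat -> R) -> Prop) (N1 N2 : (nat -> R) -> R) :=
  exists C : R, 0 < C /\ forall a, P a -> N1 a <= C * N2 a /\ N2 a <= C * N1 a.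

(* multiplication of J(Z): coordinatewise w.r.t. the difference basis
   d_0 = e_0, d_i = e_i - e_{i-1}.  For a vanishing from n on,
   a = sum_i tl n a i * d_i. *)
Definition tl (n : nat) a (i : nat) : R := \sum_(i <= j < n) a j.
Definition ofdiff (al : nat -> R) : nat -> R := fun i => al i - al i.+1.
Definition jmul (n : nat) a b : nat -> R := ofdiff (fun i => tl n a i * tl n b i).

(* multiplication of J_star(Z): coefficients of f=(t,b) in e_i^* (weak-star) are t + b_i *)
Definition pmul (f g : R * (nat -> R)) : R * (nat -> R) :=
  (f.1 * g.1, fun i => f.1 * g.2 i + f.2 i * g.1 + f.2 i * g.2 i).

(* sum_i c_i (e_{2i+1} - e_{2i}) *)
Definition dspread c : nat -> R := fun k => if odd k then c k./2 else - c k./2.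
(* sum_i c_i e_{2i} *)
Definition espread c : nat -> R := fun k => if odd k then 0 else c k./2.
(* sum_i b_i e_{2i+1}^* *)
Definition oddspread c : nat -> R := fun k => if odd k then c k./2 else 0.
(* sum_i b_i (e_{2i}^* + e_{2i+1}^* ) *)
Definition pairspread c : nat -> R := fun k => c k./2.

Definition Qop a : nat -> R := dspread (fun i => a i.*2.+1).
Definition Rop (f : R * (nat -> R)) : R * (nat -> R) :=
  (0, fun k => if odd k then fev f k - fev f k.-1 else 0).
(* S(s)=s and S(f) = sum_i f(e_{2i})(e_{2i}^*+e_{2i+1}^* ) on span{e_i^*} *)
Definition Sop (f : R * (nat -> R)) : R * (nat -> R) :=
  (f.1, fun k => f.2 (k./2).*2).

End Defs.

(* Main.v *)
Require Import Defs.
From HB Require Import structures.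
From mathcomp Require Import all_boot all_order all_algebra.
From mathcomp Require Import boolp classical_sets reals.
From mathcomp Require Import ring lra zify.
Set Implicit Arguments. Unset Strict Implicit. Unset Printing Implicit Defensive.
Import Order.TTheory GRing.Theory Num.Theory.
Local Open Scope ring_scope.

Section Norm.
Variable R : realType.
Variable N : (nat -> R) -> R.
Hypothesis HN : normalized_1uncond N.

Lemma fsupp_vanish n (a : nat -> R) : vanish n a -> fsupp a.
Proof. by exists n. Qed.

Lemma fsupp0 : fsupp (fun _ : nat => (0:R)).
Proof. by exists 0%N. Qed.

Lemma fsuppZ t (a : nat -> R) : fsupp a -> fsupp (fun i => t * a i).
Proof. by case=> n Hn; exists n => i Hi; rewrite Hn // mulr0. Qed.

Lemma fsuppD (a b : nat -> R) : fsupp a -> fsupp b -> fsupp (fun i => a i + b i).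
Proof.
case=> n Hn [m Hm]; exists (maxn n m) => i Hi.
rewrite Hn ?Hm ?addr0 //; [exact: leq_trans (leq_maxr n m) Hi|exact: leq_trans (leq_maxl n m) Hi].
Qed.

Lemma fsuppN (a : nat -> R) : fsupp a -> fsupp (fun i => - a i).
Proof. by case=> n Hn; exists n => i Hi; rewrite Hn // oppr0. Qed.

Lemma fsuppB (a b : nat -> R) : fsupp a -> fsupp b -> fsupp (fun i => a i - b i).
Proof. by move=> Ha Hb; apply: fsuppD => //; apply: fsuppN. Qed.

Lemma fsuppM (a : nat -> R) (g : nat -> R) : fsupp a -> fsupp (fun i => g i * a i).
Proof. by case=> n Hn; exists n => i Hi; rewrite Hn // mulr0. Qed.

Lemma fsupp_if (P : pred nat) (a : nat -> R) : fsupp a -> fsupp (fun i => if P i then a i else 0).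
Proof. by case=> n Hn; exists n => i Hi; rewrite Hn //; case: ifP. Qed.

Lemma N_ext (a b : nat -> R) : a =1 b -> N a = N b.
Proof. by move=> H; rewrite (funext H). Qed.

Lemma N_ge0 a : fsupp a -> 0 <= N a.
Proof. by case: HN => [[H _] _]; apply H. Qed.

Lemma N_scale t a : fsupp a -> N (fun i => t * a i) = `|t| * N a.
Proof. by case: HN => [[_ [_ [H _]]] _]; apply H. Qed.

Lemma N_add a b : fsupp a -> fsupp b -> N (fun i => a i + b i) <= N a + N b.
Proof. by case: HN => [[_ [_ [_ H]]] _]; apply H. Qed.

Lemma N_evec i : N (@evec R i) = 1.
Proof. by case: HN => [_ [H _]]; apply H. Qed.

Lemma N_sign a eps : fsupp a -> (forall i, eps i = 1 \/ eps i = -1) ->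
     N (fun i => eps i * a i) = N a.
Proof. by case: HN => [_ [_ H]]; apply H. Qed.

Lemma N0 : N (fun _ => 0) = 0.
Proof.
have H := N_scale 0 fsupp0; rewrite normr0 !mul0r in H.
etransitivity; last exact H.
by [].

Qed.

Lemma N_opp a : fsupp a -> N (fun i => - a i) = N a.
Proof.
move=> Ha; rewrite -[RHS]mul1r -(normrN1 R) -N_scale //.
by apply: N_ext => i; rewrite mulN1r.
Qed.

Lemma N_sub a b : fsupp a -> fsupp b -> N (fun i => a i - b i) <= N a + N b.
Proof.
move=> Ha Hb; rewrite -(N_opp Hb); apply: N_add => //; exact: fsuppN.
Qed.

Lemma N_proj (P : pred nat) a : fsupp a -> N (fun i => if P i then a i else 0) <= N a.
Proof.
move=> Ha.
pose eps i : R := if P i then 1 else -1.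
have He : forall i, eps i = 1 \/ eps i = -1 by move=> i; rewrite /eps; case: ifP; [left|right].
have E : (fun i => if P i then a i else 0) =1 (fun i => 2^-1 * (a i + eps i * a i)).
  move=> i; rewrite /eps; case: ifP => _.
    by lra.
  by rewrite mulN1r subrr mulr0.
rewrite (N_ext E) N_scale; last by apply: fsuppD => //; exact: fsuppM.
have := N_add Ha (fsuppM eps Ha); rewrite N_sign // => H.
rewrite ger0_norm ?invr_ge0 ?ler0n //.
lra.
Qed.

Lemma N_single i x : N (fun j => if j == i then x else 0) = `|x|.
Proof.
have E : (fun j => if j == i then x else 0) =1 (fun j => x * evec R i j).
  by move=> j; rewrite /evec; case: ifP; rewrite ?mulr1 ?mulr0.
rewrite (N_ext E) N_scale ?N_evec ?mulr1 //.
by exists i.+1 => j Hj; rewrite /evec; case: eqP => // E'; move: Hj; rewrite E' ltnn.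
Qed.

Lemma N_coord a i : fsupp a -> `|a i| <= N a.
Proof.
move=> Ha; have := N_proj (pred1 i) Ha.
have E : (fun j => if pred1 i j then a j else 0) =1 (fun j => if j == i then a i else 0).
  by move=> j /=; case: eqP => // ->.
by rewrite (N_ext E) N_single.
Qed.

Lemma N_le_sum n a : vanish n a -> N a <= \sum_(i < n) `|a i|.
Proof.
elim: n a => [|n IH] a Ha.
  rewrite big_ord0 (N_ext (b := fun _ => 0)) ?N0 // => i; exact: Ha.
rewrite big_ord_recr /=.
have E : a =1 (fun i => (if (i < n)%N then a i else 0) + (if i == n then a n else 0)).
  move=> i; case: (ltngtP i n) => Hi.
  - by rewrite addr0.
  - by rewrite add0r Ha.
  - by rewrite Hi add0r.
rewrite (N_ext E); apply: le_trans (N_add _ _) _.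
- by exists n => i Hi; rewrite ltnNge Hi.
- by exists n.+1 => i Hi; case: eqP => // E'; move: Hi; rewrite E' ltnn.
rewrite N_single lerD2r.
apply: le_trans (IH _ _) _; first by move=> i Hi; rewrite ltnNge Hi.
by apply: ler_sum => i _; rewrite ltn_ord.
Qed.

End Norm.


Section Place.
Variable R : realType.
Implicit Types (c : nat -> R) (k m : nat -> nat).

Definition sinc n k := forall j, (j.+1 < n)%N -> (k j < k j.+1)%N.

Lemma sinc_lt n k : sinc n k -> forall i j, (i < j)%N -> (j < n)%N -> (k i < k j)%N.
Proof.
move=> H i j Hij; elim: j Hij => // j IH; rewrite ltnS leq_eqVlt => /orP [/eqP <-|Hij] Hj.
  exact: H.
apply: ltn_trans (IH Hij (ltnW Hj)) (H _ Hj).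
Qed.

Lemma sinc_le n k : sinc n k -> forall i j, (i <= j)%N -> (j < n)%N -> (k i <= k j)%N.
Proof.
move=> H i j; rewrite leq_eqVlt => /orP [/eqP ->//|Hij] Hj.
exact: ltnW (sinc_lt H Hij Hj).
Qed.

Definition injon n k := forall j j', (j < n)%N -> (j' < n)%N -> k j = k j' -> j = j'.

Lemma sinc_inj n k : sinc n k -> injon n k.
Proof.
move=> H j j' Hj Hj' E; case: (ltngtP j j') => // Hl.
  by have := sinc_lt H Hl Hj'; rewrite E ltnn.
by have := sinc_lt H Hl Hj; rewrite E ltnn.
Qed.

Lemma place_at n k c j : injon n k -> (j < n)%N -> place k c n (k j) = c j.
Proof.
move=> Hi Hj; rewrite /place (bigD1 (Ordinal Hj)) /= ?eqxx // big1 ?addr0 //.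
move=> j' /andP [/eqP Hk Hne]; exfalso; move/negP: Hne; apply; apply/eqP.
by apply: val_inj => /=; apply: Hi.
Qed.

Lemma place_out n k c i : (forall j, (j < n)%N -> k j != i) -> place k c n i = 0.
Proof. by move=> H; rewrite /place big1 // => j /eqP Hj; move: (H j (ltn_ord j)); rewrite Hj eqxx. Qed.

Lemma place_fsupp k c n : fsupp (place k c n).
Proof.
exists (\max_(j < n) k j).+1 => i Hi; apply: place_out => j Hj.
apply/eqP => E; move: Hi; rewrite -E ltnNge.
by rewrite (leq_bigmax (F := fun j : 'I_n => k j) (Ordinal Hj)).
Qed.

Lemma placeD k c1 c2 n i : place k (fun j => c1 j + c2 j) n i = place k c1 n i + place k c2 n i.
Proof. by rewrite /place big_split. Qed.

Lemma placeN k c n i : place k (fun j => - c j) n i = - place k c n i.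
Proof. by rewrite /place sumrN. Qed.

Lemma placeB k c1 c2 n i : place k (fun j => c1 j - c2 j) n i = place k c1 n i - place k c2 n i.
Proof. by rewrite placeD placeN. Qed.

Lemma placeZ k t c n i : place k (fun j => t * c j) n i = t * place k c n i.
Proof. by rewrite /place mulr_sumr. Qed.

Lemma place_ext k k' c c' n i : (forall j, (j < n)%N -> k j = k' j /\ c j = c' j) ->
  place k c n i = place k' c' n i.
Proof.
move=> H; rewrite /place big_mkcond [RHS]big_mkcond; apply: eq_bigr => j _.
by case: (H j (ltn_ord j)) => -> ->.
Qed.

Lemma place_even k c n i : place k c n i.*2 =
  place (fun j => (k j)./2) (fun j => if odd (k j) then 0 else c j) n i.
Proof.
rewrite /place big_mkcond [RHS]big_mkcond; apply: eq_bigr => j _.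
have [Ho|Ho] := boolP (odd (k j)).
  have -> : (k j == i.*2) = false by lia.
  by case: ifP.
by have -> : (k j == i.*2) = ((k j)./2 == i) by lia.
Qed.

Lemma place_odd k c n i : place k c n i.*2.+1 =
  place (fun j => (k j)./2) (fun j => if odd (k j) then c j else 0) n i.
Proof.
rewrite /place big_mkcond [RHS]big_mkcond; apply: eq_bigr => j _.
have [Ho|Ho] := boolP (odd (k j)).
  by have -> : (k j == i.*2.+1) = ((k j)./2 == i) by lia.
have -> : (k j == i.*2.+1) = false by lia.
by case: ifP.
Qed.

Lemma place_recr k c n x : place k c n.+1 x = place k c n x + (if k n == x then c n else 0).
Proof. by rewrite /place big_mkcond big_ord_recr /= -big_mkcond. Qed.

Lemma compress n (P : pred nat) : exists n' (s : nat -> nat),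
  (forall i, (i < n')%N -> (s i < n)%N /\ P (s i)) /\ sinc n' s /\
  (forall k c x, place k (fun j => if P j then c j else 0) n x = place (fun i => k (s i)) (fun i => c (s i)) n' x).
Proof.
elim: n => [|n [n' [s [H1 [H2 H3]]]]].
  exists 0%N, id; split => //; split => // k c x.
  by rewrite /place !big_ord0.
case HP: (P n).
  exists n'.+1, (fun i => if (i < n')%N then s i else n); split; [|split].
  - move=> i; rewrite ltnS leq_eqVlt => /orP [/eqP ->|Hi]; first by rewrite ltnn.
    by rewrite Hi; case: (H1 i Hi) => ? ?; split => //; apply: ltnW.
  - move=> j Hj; rewrite ltnS in Hj; rewrite Hj.
    case: (ltnP j.+1 n') => Hj'; first by apply: H2.
    by case: (H1 j Hj).
  - move=> k c x; rewrite !place_recr ltnn HP H3; congr (_ + _).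
    by apply: place_ext => j Hj; rewrite Hj.
exists n', s; split; [|split] => //.
- by move=> i Hi; case: (H1 i Hi) => ? ?; split => //; apply: ltnW.
- move=> k c x; rewrite !place_recr HP H3.
  by case: ifP => _; rewrite addr0.
Qed.

End Place.


Section Sums.
Variable R : realType.

Lemma sum_widen m n (g : nat -> R) : vanish m g -> (m <= n)%N ->
  \sum_(i < n) g i = \sum_(i < m) g i.
Proof.
move=> Hg Hmn; rewrite [RHS](big_ord_widen n g Hmn) [RHS]big_mkcond; apply: eq_bigr => i _.
by case: ltnP => // Hi; rewrite Hg.
Qed.

Lemma sum_mono m n (g : nat -> R) : (forall i, 0 <= g i) -> (m <= n)%N ->
  \sum_(i < m) g i <= \sum_(i < n) g i.
Proof.
move=> Hg Hmn; rewrite [X in X <= _](big_ord_widen n g Hmn) [X in X <= _]big_mkcond; apply: ler_sum => i _.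
by case: ifP.
Qed.

Lemma sum_pairs n (h : nat -> R) : \sum_(i < n.*2) h i = \sum_(j < n) (h j.*2 + h j.*2.+1).
Proof.
elim: n => [|n IH]; first by rewrite !big_ord0.
by rewrite doubleS !big_ord_recr /= IH addrA.
Qed.

Lemma sum_le_abs n (g : nat -> R) : `|\sum_(i < n) g i| <= \sum_(i < n) `|g i|.
Proof. exact: ler_norm_sum. Qed.

End Sums.

Local Open Scope classical_set_scope.
Section Jam.
Variable R : realType.
Implicit Types (a c : nat -> R) (k m : nat -> nat).

Definition Ssum a k m (j : nat) : R := \sum_(k j <= i < (m j).+1) a i.

Definition AD n k m := (forall j, (j < n)%N -> (k j <= m j)%N) /\
                       (forall j, (j.+1 < n)%N -> (m j < k j.+1)%N).

Lemma AD_sinck n k m : AD n k m -> sinc n k.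
Proof. by case=> H1 H2 j Hj; apply: leq_ltn_trans (H1 j (ltnW Hj)) (H2 j Hj). Qed.

Lemma AD_sincm n k m : AD n k m -> sinc n m.
Proof. by case=> H1 H2 j Hj; apply: leq_trans (H2 j Hj) (H1 _ Hj). Qed.

Lemma AD_ext n k m k' m' : (forall j, (j < n)%N -> k j = k' j /\ m j = m' j) ->
   AD n k m -> AD n k' m'.
Proof.
move=> E [H1 H2]; split=> j Hj.
  by case: (E j Hj) => <- <-; apply: H1.
case: (E j (ltnW Hj)) => _ <-; case: (E j.+1 Hj) => <- _; exact: H2.
Qed.

Definition nk (l : seq (nat * nat)) j := (nth (0,0)%N l j).1.
Definition nm (l : seq (nat * nat)) j := (nth (0,0)%N l j).2.

Lemma adm_AD l : adm l <-> AD (size l) (nk l) (nm l).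
Proof.
elim: l => [|p l IH] /=.
  by split=> // _; split.
split.
  case=> H1 [H2 /IH [H3 H4]]; split.
    by case=> [|j] //= Hj; apply: H3.
  case=> [|j] /= Hj; last by apply: H4.
  by move: H2 Hj; case: l {IH H3 H4} => //.
case=> H1 H2; split; first exact: (H1 0%N).
split.
  move: (H2 0%N); case: l {IH H1 H2} => //= q l H; exact: H.
apply/IH; split.
  by move=> j Hj; apply: (H1 j.+1).
by move=> j Hj; apply: (H2 j.+1).
Qed.

Lemma jvec_place a l x : jvec a l x = place (nk l) (Ssum a (nk l) (nm l)) (size l) x.
Proof.
rewrite /jvec (big_nth (0,0)%N) big_mkord /place.
by apply: eq_bigr.
Qed.

Lemma mkseq_nk n k m j : (j < n)%N -> nk (mkseq (fun j => (k j, m j)) n) j = k j /\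
   nm (mkseq (fun j => (k j, m j)) n) j = m j.
Proof. by move=> Hj; rewrite /nk /nm nth_mkseq. Qed.

Variable N : (nat -> R) -> R.
Hypothesis HN : normalized_1uncond N.

Definition Jset a := [set r | exists n k m, AD n k m /\ r = N (place k (Ssum a k m) n)].

Lemma Jnorm_eq a : Jnorm N a = sup (Jset a).
Proof.
rewrite /Jnorm; congr sup; apply/seteqP; split => r /=.
  case=> l [/adm_AD Hl ->]; exists (size l), (nk l), (nm l); split => //.
  by congr N; apply: funext => x; rewrite jvec_place.
case=> n [k [m [Hl ->]]]; exists (mkseq (fun j => (k j, m j)) n); split.
  apply/adm_AD; rewrite size_mkseq; apply: AD_ext Hl => j Hj.
  by case: (mkseq_nk k m Hj).
congr N; apply: funext => x; rewrite jvec_place size_mkseq; apply: place_ext => j Hj.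
by case: (mkseq_nk k m Hj) => E1 E2; rewrite E1; split => //; rewrite /Ssum E1 E2.
Qed.

Lemma Jset_ne a : Jset a !=set0.
Proof. by exists (N (place id (Ssum a id id) 0)), 0%N, id, id; split => //; split. Qed.

Lemma Ssum_abs a k m j na : vanish na a -> `|Ssum a k m j| <= \sum_(i < na) `|a i|.
Proof.
move=> Ha; rewrite /Ssum; apply: le_trans (ler_norm_sum _ _ _) _.
case: (leqP (k j) (m j).+1) => Hkm; last first.
  by rewrite big_geq ?(ltnW Hkm) //; apply: sumr_ge0.
rewrite -(@sum_widen _ na (na + (m j).+1)%N (fun i => `|a i|)); last by apply: leq_addr.
  rewrite -(big_mkord xpredT (fun i => `|a i|)).
  rewrite [X in _ <= X](@big_cat_nat _ _ _ (k j)) //=; last by lia.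
  rewrite [X in _ <= _ + X](@big_cat_nat _ _ _ (m j).+1 (k j)) //=; last by lia.
  apply: ler_wpDl; first by apply: sumr_ge0.
  apply: ler_wpDr => //; by apply: sumr_ge0.
by move=> i Hi; rewrite Ha ?normr0.
Qed.

Lemma place_vanish a k m n na : vanish na a -> vanish na (place k (Ssum a k m) n).
Proof.
move=> Ha x Hx; rewrite /place big1 // => j /eqP Hj.
rewrite /Ssum big_nat_cond big1 // => i /andP [/andP [Hi _] _].
by apply: Ha; apply: leq_trans Hx _; rewrite -Hj.
Qed.

Lemma Jset_bd a : fsupp a -> has_ubound (Jset a).
Proof.
case=> na Ha; exists (na%:R * \sum_(i < na) `|a i|) => r [n [k [m [Hl ->]]]].
apply: le_trans (N_le_sum HN (place_vanish k m n Ha)) _.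
apply: le_trans (_ : _ <= \sum_(x < na) \sum_(i < na) `|a i|) _; last first.
  by rewrite sumr_const card_ord mulr_natl.
apply: ler_sum => x _.
have [/existsP [j /eqP Hj]|Hn] := boolP [exists j : 'I_n, k j == x].
  by rewrite -Hj place_at //; [apply: Ssum_abs|apply: sinc_inj; apply: AD_sinck Hl].
rewrite place_out ?normr0; first by apply: sumr_ge0.
move=> j Hj; apply/negP => E; move/negP: Hn; apply; apply/existsP; by exists (Ordinal Hj).
Qed.

Lemma Jnorm_lb a n k m : fsupp a -> AD n k m -> N (place k (Ssum a k m) n) <= Jnorm N a.
Proof.
move=> Ha Hl; rewrite Jnorm_eq; apply: ub_le_sup; first exact: Jset_bd.
by exists n, k, m.
Qed.

Lemma Jnorm_ub a B : (forall n k m, AD n k m -> N (place k (Ssum a k m) n) <= B) -> Jnorm N a <= B.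
Proof.
move=> H; rewrite Jnorm_eq; apply: ge_sup; first exact: Jset_ne.
by move=> r [n [k [m [Hl ->]]]]; apply: H.
Qed.

Lemma place0 k c x : place k c 0 x = 0.
Proof. by rewrite /place big_ord0. Qed.

Lemma Jnorm_ge0 a : fsupp a -> 0 <= Jnorm N a.
Proof.
move=> Ha; apply: le_trans (Jnorm_lb Ha (n := 0%N) (k := id) (m := id) _).
  by rewrite (N_ext N (b := fun _ => 0)) ?(N0 HN) // => x; rewrite place0.
by split.
Qed.

Lemma Jnorm0 : Jnorm N (fun _ => 0) <= 0.
Proof.
apply: Jnorm_ub => n k m _; rewrite (N_ext N (b := fun _ => 0)) ?(N0 HN) // => x.
by rewrite /place big1 // => j _; rewrite /Ssum big1.
Qed.

Lemma SsumZ t a k m j : Ssum (fun i => t * a i) k m j = t * Ssum a k m j.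
Proof. by rewrite /Ssum mulr_sumr. Qed.

Lemma SsumD a b k m j : Ssum (fun i => a i + b i) k m j = Ssum a k m j + Ssum b k m j.
Proof. by rewrite /Ssum big_split. Qed.

Lemma SsumB a b k m j : Ssum (fun i => a i - b i) k m j = Ssum a k m j - Ssum b k m j.
Proof. by rewrite /Ssum sumrB. Qed.

Lemma Jnorm_scale t a : fsupp a -> Jnorm N (fun i => t * a i) <= `|t| * Jnorm N a.
Proof.
move=> Ha; apply: Jnorm_ub => n k m Hl.
rewrite (N_ext N (b := fun x => t * place k (Ssum a k m) n x)); last first.
  by move=> x; rewrite -placeZ; apply: place_ext => j _; rewrite SsumZ.
rewrite (N_scale HN) //; last exact: place_fsupp.
by apply: ler_wpM2l => //; apply: Jnorm_lb.
Qed.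

Lemma Jnorm_add a b : fsupp a -> fsupp b -> Jnorm N (fun i => a i + b i) <= Jnorm N a + Jnorm N b.
Proof.
move=> Ha Hb; apply: Jnorm_ub => n k m Hl.
rewrite (N_ext N (b := fun x => place k (Ssum a k m) n x + place k (Ssum b k m) n x)); last first.
  by move=> x; rewrite -placeD; apply: place_ext => j _; rewrite SsumD.
apply: le_trans (N_add HN (place_fsupp _ _ _) (place_fsupp _ _ _)) _.
by apply: lerD; apply: Jnorm_lb.
Qed.

Lemma Jnorm_sub a b : fsupp a -> fsupp b -> Jnorm N (fun i => a i - b i) <= Jnorm N a + Jnorm N b.
Proof.
move=> Ha Hb; apply: Jnorm_ub => n k m Hl.
rewrite (N_ext N (b := fun x => place k (Ssum a k m) n x - place k (Ssum b k m) n x)); last first.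
  by move=> x; rewrite -placeB; apply: place_ext => j _; rewrite SsumB.
apply: le_trans (N_sub HN (place_fsupp _ _ _) (place_fsupp _ _ _)) _.
by apply: lerD; apply: Jnorm_lb.
Qed.

Lemma place1 k c x : place k c 1 x = if k 0%N == x then c 0%N else 0.
Proof. by rewrite place_recr place0 add0r. Qed.

Lemma Jnorm_coord a i : fsupp a -> `|a i| <= Jnorm N a.
Proof.
move=> Ha; apply: le_trans (Jnorm_lb Ha (n := 1%N) (k := fun _ => i) (m := fun _ => i) _).
  rewrite (N_ext N (b := fun x => if x == i then a i else 0)) ?(N_single HN) //.
  by move=> x; rewrite place1 eq_sym /Ssum big_nat1.
by split => // j; rewrite ltnS leqn0.
Qed.

Lemma Jnorm_sumall a n : fsupp a -> `|\sum_(i < n) a i| <= Jnorm N a.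
Proof.
move=> Ha; case: n => [|n]; first by rewrite big_ord0 normr0; apply: Jnorm_ge0.
apply: le_trans (Jnorm_lb Ha (n := 1%N) (k := fun _ => 0%N) (m := fun _ => n) _).
  rewrite (N_ext N (b := fun x => if x == 0%N then \sum_(i < n.+1) a i else 0)) ?(N_single HN) //.
  by move=> x; rewrite place1 eq_sym /Ssum big_mkord.
by split => // j; rewrite ltnS leqn0.
Qed.

Definition Jsset (f : R * (nat -> R)) := [set r | exists (n : nat) a, vanish n a /\ Jnorm N a <= 1 /\
                 r = \sum_(i < n) (f.1 + f.2 i) * a i].

Lemma Jsnorm_ub (f : R * (nat -> R)) (B : R) : (forall n a, vanish n a -> Jnorm N a <= 1 ->
   \sum_(i < n) (f.1 + f.2 i) * a i <= B) -> Jsnorm N f <= B.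
Proof.
move=> H; apply: ge_sup.
  exists 0; exists 0%N, (fun _ => 0); split => //; split; last by rewrite big_ord0.
  by apply: le_trans Jnorm0 _.
by move=> r [n [a [Ha [Hj ->]]]]; apply: H.
Qed.

Lemma Jsnorm_lb (f : R * (nat -> R)) n a : fsupp f.2 -> vanish n a -> Jnorm N a <= 1 ->
   \sum_(i < n) (f.1 + f.2 i) * a i <= Jsnorm N f.
Proof.
case: f => t b /= [nb Hb] Ha Hj; apply: ub_le_sup; last by exists n, a.
have Hfa : fsupp a by exists n.
exists (`|t| + \sum_(i < nb) `|b i|) => r [n' [a' [Ha' [Hj' ->]]]] /=.
have Hfa' : fsupp a' by exists n'.
apply: le_trans (ler_norm _) _.
rewrite (eq_bigr (fun i : 'I_n' => t * a' i + b i * a' i)); last by move=> i _; rewrite mulrDl.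
rewrite big_split /= -mulr_sumr; apply: le_trans (ler_normD _ _) _; apply: lerD.
  rewrite normrM -[X in _ <= X]mulr1; apply: ler_wpM2l => //.
  apply: le_trans Hj'; exact: Jnorm_sumall.
apply: le_trans (ler_norm_sum _ _ _) _.
apply: le_trans (_ : \sum_(i < n') `|b i| <= _).
  apply: ler_sum => i _; rewrite normrM -[X in _ <= X]mulr1; apply: ler_wpM2l => //.
  apply: le_trans Hj'; exact: Jnorm_coord.
rewrite -(@sum_widen _ nb (nb + n')%N (fun i => `|b i|)); last by apply: leq_addr.
  by apply: (@sum_mono _ n' (nb + n')%N (fun i => `|b i|)) => //; apply: leq_addl.
by move=> i Hi; rewrite Hb ?normr0.
Qed.

End Jam.

Local Open Scope classical_set_scope.

Section W.
Variable R : realType.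
Variable N : (nat -> R) -> R.
Hypothesis HN : normalized_1uncond N.

Lemma fsupp_even (a : nat -> R) : fsupp a -> fsupp (fun i => a i.*2).
Proof. by case=> n Hn; exists n => i Hi; apply: Hn; lia. Qed.

Lemma fsupp_odd (a : nat -> R) : fsupp a -> fsupp (fun i => a i.*2.+1).
Proof. by case=> n Hn; exists n => i Hi; apply: Hn; lia. Qed.

Lemma maxle (x y z : R) : x <= z -> y <= z -> Num.max x y <= z.
Proof. by rewrite ge_max => -> ->. Qed.
Lemma lemaxl (x y : R) : x <= Num.max x y.
Proof. by rewrite le_max lexx. Qed.
Lemma lemaxr (x y : R) : y <= Num.max x y.
Proof. by rewrite le_max lexx orbT. Qed.

Lemma W_norm : normalized_1uncond (Wnorm N).
Proof.
have [[H0 [Hd [Hs Ht]]] [He Hu]] := HN.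
split; [split; [|split; [|split]]|split].
- move=> a Ha; apply: le_trans (lemaxl _ _); apply: H0; exact: fsupp_even.
- move=> a Ha; rewrite /Wnorm => Hz i.
  have Ne := H0 _ (fsupp_even Ha); have No := H0 _ (fsupp_odd Ha).
  have [Ze Zo] : N (fun i => a i.*2) = 0 /\ N (fun i => a i.*2.+1) = 0.
    have: Num.max (N (fun i => a i.*2)) (N (fun i => a i.*2.+1)) <= 0 by rewrite Hz.
    by rewrite ge_max => /andP [h1 h2]; split; apply/eqP; rewrite eq_le ?h1 ?h2.
  rewrite -[i]odd_double_half; case: (odd i) => /=.
    by rewrite add1n; apply: (Hd _ (fsupp_odd Ha) Zo).
  by rewrite add0n; apply: (Hd _ (fsupp_even Ha) Ze).
- move=> t a Ha; rewrite /Wnorm (Hs t _ (fsupp_even Ha)) (Hs t _ (fsupp_odd Ha)).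
  by rewrite maxr_pMr.
- move=> a b Ha Hb; rewrite /Wnorm; apply: maxle.
    apply: le_trans (Ht _ _ (fsupp_even Ha) (fsupp_even Hb)) _; apply: lerD; apply: lemaxl.
  apply: le_trans (Ht _ _ (fsupp_odd Ha) (fsupp_odd Hb)) _; apply: lerD; apply: lemaxr.
- move=> i; rewrite /Wnorm; have Hi := odd_double_half i.
  case Ho: (odd i) Hi => Hi.
    rewrite (N_ext N (a := fun j => evec R i j.*2) (b := fun _ => 0)); last first.
      by move=> j; rewrite /evec; have -> : (j.*2 == i) = false by lia.
    rewrite (N_ext N (a := fun j => evec R i j.*2.+1) (b := evec R i./2)); last first.
      by move=> j; rewrite /evec; have -> : (j.*2.+1 == i) = (j == i./2) by lia.
    by rewrite (N0 HN) He max_r ?ler01.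
  rewrite (N_ext N (a := fun j => evec R i j.*2.+1) (b := fun _ => 0)); last first.
    by move=> j; rewrite /evec; have -> : (j.*2.+1 == i) = false by lia.
  rewrite (N_ext N (a := fun j => evec R i j.*2) (b := evec R i./2)); last first.
    by move=> j; rewrite /evec; have -> : (j.*2 == i) = (j == i./2) by lia.
  by rewrite (N0 HN) He max_l ?ler01.
- move=> a eps Ha Heps; rewrite /Wnorm.
  have /= -> := Hu (fun i => a i.*2) (fun i => eps i.*2) (fsupp_even Ha) (fun i => Heps i.*2).
  by have /= -> := Hu (fun i => a i.*2.+1) (fun i => eps i.*2.+1) (fsupp_odd Ha) (fun i => Heps i.*2.+1).
Qed.

Definition RDC (C : R) := forall n k m (c : nat -> R), (forall j, (j < n)%N -> (k j <= m j)%N) ->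
  (forall j, (j.+1 < n)%N -> (m j < k j.+1)%N) -> N (place k c n) <= C * N (place m c n).

Lemma place_projP (P : pred nat) q (c : nat -> R) n : injon n q ->
  N (place q (fun j => if P j then c j else 0) n) <= N (place q c n).
Proof.
move=> Hq.
have E : place q (fun j => if P j then c j else 0) n =1
   (fun x => if [exists j : 'I_n, P j && (q j == x)] then place q c n x else 0).
  move=> x; case: ifP.
    case/existsP => j /andP [Hj /eqP <-].
    by rewrite !place_at // Hj.
  move/negbT => Hn; rewrite /place big1 // => j /eqP Hqj; case HPj: (P j) => //.
  by move/negP: Hn; case; apply/existsP; exists j; rewrite HPj Hqj eqxx.
rewrite (N_ext N E); apply: (N_proj HN (fun x => [exists j : 'I_n, P j && (q j == x)])).
exact: place_fsupp.
Qed.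

Lemma place_proj r (c : nat -> R) n : fsupp c -> injon n r -> N (place r (fun j => c (r j)) n) <= N c.
Proof.
move=> Hc Hr.
have E : place r (fun j => c (r j)) n =1
   (fun x => if [exists j : 'I_n, r j == x] then c x else 0).
  move=> x; case: ifP.
    by case/existsP => j /eqP <-; rewrite place_at.
  move/negbT => Hn; apply: place_out => j Hj; apply/negP => E.
  by move/negP: Hn; apply; apply/existsP; exists (Ordinal Hj).
rewrite (N_ext N E); exact: (N_proj HN (fun x => [exists j : 'I_n, r j == x])).
Qed.

Lemma RD2 (C : R) : 0 <= C -> RDC C -> forall n p q (c : nat -> R), sinc n p -> sinc n q ->
  (forall j, (j < n)%N -> (p j <= q j)%N) -> (forall j, (j.+1 < n)%N -> (q j <= p j.+1)%N) ->
  N (place p c n) <= (C + C) * N (place q c n).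
Proof.
move=> HC0 HC n p q c Hp Hq H1 H2.
have part : forall b, N (place p (fun j => if odd j == b then c j else 0) n) <= C * N (place q c n).
  move=> b; have [n' [s [Hs1 [Hs2 Hs3]]]] := @compress R n (fun j => odd j == b).
  rewrite (N_ext N (Hs3 p c)).
  apply: le_trans (HC n' (fun i => p (s i)) (fun i => q (s i)) (fun i => c (s i)) _ _) _.
  - by move=> i Hi; apply H1; case: (Hs1 i Hi).
  - move=> i Hi; have [h1 /eqP h2] := Hs1 i (ltnW Hi); have [h3 /eqP h4] := Hs1 i.+1 Hi.
    have h5 := Hs2 i Hi.
    have h7 : odd (s i) = odd (s i.+1) by rewrite h2 h4.
    have h6 : ((s i).+2 <= s i.+1)%N by lia.
    apply: leq_ltn_trans (H2 (s i) _) _; first by lia.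
    by apply: (sinc_lt Hp) => //; lia.
  - apply: (ler_wpM2l HC0); rewrite -(N_ext N (Hs3 q c)).
    by apply: place_projP; apply: sinc_inj.
have Hsplit : place p c n =1 fun x => place p (fun j => if odd j == false then c j else 0) n x +
     place p (fun j => if odd j == true then c j else 0) n x.
  move=> x; rewrite -placeD; apply: place_ext => j _; split => //.
  by case: (odd j); rewrite /= ?addr0 ?add0r.
rewrite (N_ext N Hsplit); apply: le_trans (N_add HN (place_fsupp _ _ _) (place_fsupp _ _ _)) _.
by rewrite mulrDl; apply: lerD; apply: part.
Qed.

Lemma RD_comp (C : R) : 0 <= C -> RDC C -> forall n k m (P : pred nat) (b : bool) (c : nat -> R),
  AD n k m -> fsupp c ->
  (forall j, P j -> odd (k j) = b /\ ~~ odd (m j)) ->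
  N (place (fun j => (k j)./2) (fun j => if P j then c (m j)./2 else 0) n) <= (C + C) * N c.
Proof.
move=> HC0 HC n k m P b c Hl Hc HP.
have [n' [s [Hs1 [Hs2 Hs3]]]] := @compress R n P.
rewrite (N_ext N (Hs3 _ (fun j => c (m j)./2))).
have Hk := AD_sinck Hl; have Hm := AD_sincm Hl.
have Hsinc : forall i, (i.+1 < n')%N -> [/\ (s i < s i.+1)%N, (s i.+1 < n)%N,
    odd (k (s i)) = b, odd (k (s i.+1)) = b & ~~ odd (m (s i)) /\ ~~ odd (m (s i.+1))].
  move=> i Hi; have [h1 h2] := Hs1 i (ltnW Hi); have [h3 h4] := Hs1 i.+1 Hi.
  have [h5 h6] := HP _ h2; have [h7 h8] := HP _ h4.
  by split => //; apply: Hs2.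
have := @RD2 C HC0 HC n' (fun i => (k (s i))./2) (fun i => (m (s i))./2) (fun i => c (m (s i))./2).
move=> H; apply: le_trans (H _ _ _ _) _.
- move=> i Hi; have [h1 h2 h3 h4 [h5 h6]] := Hsinc i Hi.
  have := sinc_lt Hk h1 h2; lia.
- move=> i Hi; have [h1 h2 h3 h4 [h5 h6]] := Hsinc i Hi.
  have := sinc_lt Hm h1 h2; lia.
- move=> i Hi; have [h1 _] := Hs1 i Hi; have := Hl.1 _ h1; lia.
- move=> i Hi; have [h1 h2 h3 h4 [h5 h6]] := Hsinc i Hi.
  have := Hl.2 (s i) (leq_ltn_trans h1 h2).
  have := sinc_le Hk h1 h2; lia.
apply: ler_wpM2l; first by rewrite addr_ge0.
apply: (place_proj (r := fun i => (m (s i))./2)) => //.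
apply: sinc_inj => i Hi; have [h1 h2 h3 h4 [h5 h6]] := Hsinc i Hi.
have := sinc_lt Hm h1 h2; lia.
Qed.

End W.

Local Open Scope classical_set_scope.

Section Spread.
Variable R : realType.
Implicit Types (c d : nat -> R).

Lemma vanish_dspread n c : vanish n c -> vanish n.*2 (dspread c).
Proof. move=> H k Hk; rewrite /dspread H ?oppr0; [by case: ifP|lia]. Qed.

Lemma vanish_espread n c : vanish n c -> vanish n.*2 (espread c).
Proof. move=> H k Hk; rewrite /espread H; [by case: ifP|lia]. Qed.

Lemma fsupp_dspread c : fsupp c -> fsupp (dspread c).
Proof. by case=> n Hn; exists n.*2; apply: vanish_dspread. Qed.

Lemma fsupp_espread c : fsupp c -> fsupp (espread c).
Proof. by case=> n Hn; exists n.*2; apply: vanish_espread. Qed.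

Lemma dspread_int c a b : (a <= b)%N -> \sum_(a <= i < b.+1) dspread c i =
  (if odd a then c a./2 else 0) - (if odd b then 0 else c b./2).
Proof.
elim: b => [|b IH] Hab.
  have -> : a = 0%N by lia.
  by rewrite big_nat1 /dspread /= add0r.
case: (ltngtP a b.+1) Hab => // Hab _; last first.
  rewrite Hab big_nat1 /dspread; case: ifP => _; by rewrite ?subr0 ?add0r.
rewrite big_nat_recr /=; last by lia.
rewrite IH; last by lia.
rewrite /dspread /=; case Hb: (odd b) => /=.
  by lra.
have -> : uphalf b = b./2 by rewrite uphalfE; lia.
lra.
Qed.

Lemma espread_int d a b : (a <= b)%N -> \sum_(a <= i < b) espread d i =
  \sum_((a.+1)./2 <= l < (b.+1)./2) d l.
Proof.
elim: b => [|b IH] Hab.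
  have -> : a = 0%N by lia.
  by rewrite !big_geq.
case: (ltngtP a b.+1) Hab => // Hab _; last first.
  by rewrite Hab !big_geq.
rewrite big_nat_recr; last by lia.
rewrite IH; last by lia.
case Hb: (odd b).
  by rewrite /espread Hb Monoid.mulm1; have -> : (b.+2)./2 = (b.+1)./2 by lia.
rewrite /espread Hb.
have -> : (b.+2)./2 = ((b.+1)./2).+1 by lia.
rewrite [RHS]big_nat_recr; last by lia.
by have -> : (b.+1)./2 = b./2 by lia.
Qed.

End Spread.

Section MainAn.
Variable R : realType.
Variable N : (nat -> R) -> R.
Hypothesis HN : normalized_1uncond N.
Let HW := W_norm HN.

Lemma Jw_odd a : fsupp a -> N (fun i => a i.*2.+1) <= Jnorm (Wnorm N) a.
Proof.
move=> Ha; have [na Hna] := Ha.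
have Hl : AD na (fun j => j.*2.+1) (fun j => j.*2.+1).
  by split => j Hj //; lia.
apply: le_trans (Jnorm_lb HW Ha Hl); rewrite /Wnorm; apply: le_trans (lemaxr _ _).
rewrite le_eqVlt; apply/orP; left; apply/eqP; apply: N_ext => i.
have Hinj : injon na (fun j => j.*2.+1) by move=> j j' _ _; lia.
case: (ltnP i na) => Hi.
  have := @place_at R na (fun j => j.*2.+1) (Ssum a (fun j => j.*2.+1) (fun j => j.*2.+1)) i Hinj Hi.
  by move=> /= ->; rewrite /Ssum big_nat1.
rewrite place_out ?Hna //; first by lia.
by move=> j Hj; apply/eqP; lia.
Qed.

Lemma place_proj_half n k (b : bool) (c : nat -> R) : sinc n k -> fsupp c ->
  N (place (fun j => (k j)./2) (fun j => if odd (k j) == b then c (k j)./2 else 0) n) <= N c.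
Proof.
move=> Hk Hc; have [n' [s [Hs1 [Hs2 Hs3]]]] := @compress R n (fun j => odd (k j) == b).
rewrite (N_ext N (Hs3 _ (fun j => c (k j)./2))).
apply: (place_proj HN (r := fun i => (k (s i))./2)) => //.
apply: sinc_inj => i Hi; have [h1 /eqP h2] := Hs1 i (ltnW Hi); have [h3 /eqP h4] := Hs1 i.+1 Hi.
have := sinc_lt Hk (Hs2 i Hi) h3; lia.
Qed.

Variable C : R.
Hypothesis HC0 : 0 <= C.
Hypothesis HC : RDC N C.

Lemma Jw_dspread c : fsupp c -> Jnorm (Wnorm N) (dspread c) <= (1 + (C + C) + (C + C)) * N c.
Proof.
move=> Hc; have Nc := N_ge0 HN Hc; have HC0' := HC0; apply: Jnorm_ub => n k m Hl.
have HS : forall j, (j < n)%N -> Ssum (dspread c) k m j =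
   (if odd (k j) then c (k j)./2 else 0) - (if odd (m j) then 0 else c (m j)./2).
  by move=> j Hj; rewrite /Ssum dspread_int //; apply: Hl.1.
rewrite /Wnorm; apply: maxle.
  rewrite (N_ext N (fun i => place_even _ _ _ i)).
  rewrite (N_ext N (b := fun i => - place (fun j => (k j)./2)
     (fun j => if ~~ odd (k j) && ~~ odd (m j) then c (m j)./2 else 0) n i)); last first.
    move=> i; rewrite -placeN; apply: place_ext => j Hj; split => //; rewrite HS //.
    by case: (odd (k j)) => /=; case: (odd (m j)) => /=; rewrite ?oppr0 ?subr0 ?sub0r ?addr0.
  rewrite N_opp //; last exact: place_fsupp.
  apply: le_trans (RD_comp HN HC0 HC (b := false) Hl Hc _) _.
    by move=> j /andP [h1 h2]; split => //; apply/negbTE.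
  by apply: ler_wpM2r => //; lra.
rewrite (N_ext N (fun i => place_odd _ _ _ i)).
rewrite (N_ext N (b := fun i => place (fun j => (k j)./2)
     (fun j => if odd (k j) == true then c (k j)./2 else 0) n i - place (fun j => (k j)./2)
     (fun j => if odd (k j) && ~~ odd (m j) then c (m j)./2 else 0) n i)); last first.
  move=> i; rewrite -placeB; apply: place_ext => j Hj; split => //.
  by rewrite HS //; case: (odd (k j)) => /=; case: (odd (m j)) => /=; rewrite ?subr0.
apply: le_trans (N_sub HN (place_fsupp _ _ _) (place_fsupp _ _ _)) _.
have H1 := place_proj_half true (AD_sinck Hl) Hc.
have H2 := RD_comp HN HC0 HC (P := fun j => odd (k j) && ~~ odd (m j)) (b := true) Hl Hc
  (fun j => fun H => match andP H with conj h1 h2 => conj h1 h2 end).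
have H3 := mulr_ge0 HC0 Nc.
rewrite !mulrDl mul1r in H2 *; lra.
Qed.

Lemma JN_espread d : fsupp d -> Jnorm N d <= Jnorm (Wnorm N) (espread d).
Proof.
move=> Hd; apply: Jnorm_ub => n k m Hl.
have Hl' : AD n (fun j => (k j).*2) (fun j => (m j).*2).
  by case: Hl => H1 H2; split => j Hj; [have := H1 j Hj|have := H2 j Hj]; lia.
apply: le_trans (Jnorm_lb HW (fsupp_espread Hd) Hl'); rewrite /Wnorm.
apply: le_trans (lemaxl _ _); rewrite (N_ext N (fun i => place_even _ _ _ i)).
rewrite le_eqVlt; apply/orP; left; apply/eqP; apply: N_ext => i.
apply: place_ext => j Hj; rewrite odd_double doubleK; split => //.
rewrite /Ssum espread_int; last by have := Hl.1 j Hj; lia.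
have -> : ((k j).*2.+1)./2 = k j by lia.
by have -> : ((m j).*2.+2)./2 = (m j).+1 by lia.
Qed.

Lemma Jw_espread d : fsupp d -> Jnorm (Wnorm N) (espread d) <= (1 + (C + C)) * Jnorm N d.
Proof.
move=> Hd; have Jd := Jnorm_ge0 HN Hd; have HC0' := HC0; apply: Jnorm_ub => n k m Hl.
have Hk := AD_sinck Hl.
have HS : forall j, (j < n)%N -> Ssum (espread d) k m j =
   \sum_(((k j).+1)./2 <= l < ((m j).+2)./2) d l.
  by move=> j Hj; rewrite /Ssum espread_int //; have := Hl.1 j Hj; lia.
rewrite /Wnorm; apply: maxle.
  rewrite (N_ext N (fun i => place_even _ _ _ i)).
  have [n' [s [Hs1 [Hs2 Hs3]]]] := @compress R n (fun j => ~~ odd (k j)).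
  rewrite (N_ext N (b := fun i => place (fun j => (k j)./2)
     (fun j => if ~~ odd (k j) then Ssum (espread d) k m j else 0) n i)); last first.
    by move=> i; apply: place_ext => j _; split => //; case: odd.
  rewrite (N_ext N (Hs3 _ _)).
  have Hl2 : AD n' (fun i => (k (s i))./2) (fun i => (m (s i))./2).
    split => i Hi.
      by have [h1 _] := Hs1 i Hi; have := Hl.1 _ h1; lia.
    have [h1 h2] := Hs1 i (ltnW Hi); have [h3 h4] := Hs1 i.+1 Hi; have h5 := Hs2 i Hi.
    have := Hl.2 (s i) (leq_ltn_trans h5 h3); have := sinc_le Hk h5 h3; lia.
  apply: (@le_trans _ _ (Jnorm N d)); last first.
    by rewrite -[X in X <= _]mul1r; apply: ler_wpM2r => //; lra.
  apply: le_trans (Jnorm_lb HN Hd Hl2); rewrite le_eqVlt; apply/orP; left; apply/eqP.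
  apply: N_ext => x; apply: place_ext => i Hi; split => //; have [h1 h2] := Hs1 i Hi.
  rewrite HS // /Ssum; have -> : ((k (s i)).+1)./2 = (k (s i))./2 by lia.
  by have -> : ((m (s i)).+2)./2 = ((m (s i))./2).+1 by lia.
rewrite (N_ext N (fun i => place_odd _ _ _ i)).
rewrite (N_ext N (b := fun i => place (fun j => (k j)./2)
   (fun j => if odd (k j) && (k j < m j)%N then Ssum (espread d) k m j else 0) n i)); last first.
  move=> i; apply: place_ext => j Hj; split => //; case Ho: (odd (k j)) => //=.
  case: ltnP => // Hkm; rewrite HS // big_geq //; have := Hl.1 j Hj; lia.
have [n' [s [Hs1 [Hs2 Hs3]]]] := @compress R n (fun j => odd (k j) && (k j < m j)%N).
rewrite (N_ext N (Hs3 _ _)).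
have Hsinc : forall i, (i.+1 < n')%N -> ((k (s i)).+2 <= k (s i.+1))%N /\ (m (s i) < k (s i.+1))%N.
  move=> i Hi; have [h1 /andP [h2 _]] := Hs1 i (ltnW Hi); have [h3 /andP [h4 _]] := Hs1 i.+1 Hi.
  have h5 := Hs2 i Hi.
  have := Hl.2 (s i) (leq_ltn_trans h5 h3); have := sinc_le Hk h5 h3; have := sinc_lt Hk h5 h3.
  lia.
have H := @RD2 R N HN C HC0 HC n' (fun i => (k (s i))./2) (fun i => ((k (s i)).+1)./2)
  (fun i => Ssum (espread d) k m (s i)).
apply: le_trans (H _ _ _ _) _.
- by move=> i Hi; have := Hsinc i Hi; lia.
- by move=> i Hi; have := Hsinc i Hi; lia.
- by move=> i Hi; lia.
- by move=> i Hi; have := Hsinc i Hi; lia.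
have Hl2 : AD n' (fun i => ((k (s i)).+1)./2) (fun i => (m (s i))./2).
  split => i Hi.
    by have [h1 /andP [h2 h3]] := Hs1 i Hi; lia.
  by have := Hsinc i Hi; lia.
apply: (@le_trans _ _ ((C + C) * Jnorm N d)); last first.
  by apply: ler_wpM2r => //; lra.
apply: (ler_wpM2l (addr_ge0 HC0 HC0)).
apply: le_trans (Jnorm_lb HN Hd Hl2); rewrite le_eqVlt; apply/orP; left; apply/eqP.
apply: N_ext => x; apply: place_ext => i Hi; split => //.
by rewrite HS ?(Hs1 i Hi).1 // /Ssum; have -> : ((m (s i)).+2)./2 = ((m (s i))./2).+1 by lia.
Qed.

End MainAn.

Local Open Scope classical_set_scope.

Section Alg.
Variable R : realType.
Implicit Types (a b c d : nat -> R).

Lemma dspread_odd c i : dspread c i.*2.+1 = c i.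
Proof. rewrite /dspread; have -> : odd i.*2.+1 = true by lia. by have -> : (i.*2.+1)./2 = i by lia. Qed.
Lemma dspread_even c i : dspread c i.*2 = - c i.
Proof. rewrite /dspread; have -> : odd i.*2 = false by lia. by have -> : (i.*2)./2 = i by lia. Qed.
Lemma espread_odd c i : espread c i.*2.+1 = 0.
Proof. rewrite /espread; by have -> : odd i.*2.+1 = true by lia. Qed.
Lemma espread_even c i : espread c i.*2 = c i.
Proof. rewrite /espread; have -> : odd i.*2 = false by lia. by have -> : (i.*2)./2 = i by lia. Qed.
Lemma oddspread_odd c i : oddspread c i.*2.+1 = c i.
Proof. rewrite /oddspread; have -> : odd i.*2.+1 = true by lia. by have -> : (i.*2.+1)./2 = i by lia. Qed.
Lemma oddspread_even c i : oddspread c i.*2 = 0.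
Proof. rewrite /oddspread; by have -> : odd i.*2 = false by lia. Qed.
Lemma pairspread_odd c i : pairspread c i.*2.+1 = c i.
Proof. rewrite /pairspread; by have -> : (i.*2.+1)./2 = i by lia. Qed.
Lemma pairspread_even c i : pairspread c i.*2 = c i.
Proof. rewrite /pairspread; by have -> : (i.*2)./2 = i by lia. Qed.

Lemma sum_pairs_v n (g a : nat -> R) : vanish n a ->
  \sum_(i < n) g i * a i = \sum_(j < n) (g j.*2 * a j.*2 + g j.*2.+1 * a j.*2.+1).
Proof.
move=> Ha; rewrite -(@sum_widen _ n n.*2 (fun i => g i * a i)); last by lia.
  exact: (sum_pairs n (fun i => g i * a i)).
by move=> i Hi; rewrite Ha ?mulr0.
Qed.

Lemma Qop_dspread c : Qop (dspread c) = dspread c.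
Proof. by rewrite /Qop; congr dspread; apply: funext => i; rewrite dspread_odd. Qed.

Lemma IQ a : (fun k => a k - Qop a k) = espread (fun i => a i.*2 + a i.*2.+1).
Proof.
apply: funext => k; rewrite /Qop /dspread /espread; case Ho: (odd k).
  have -> : (k./2).*2.+1 = k by lia.
  by rewrite subrr.
have -> : (k./2).*2.+1 = k.+1 by lia.
rewrite opprK; by have -> : (k./2).*2 = k by lia.
Qed.

Lemma tl_dspread n c i : vanish n (dspread c) -> tl n (dspread c) i = if odd i then c i./2 else 0.
Proof.
move=> Hv; rewrite /tl; case: (ltnP i n) => Hi.
  case: n Hv Hi => // n Hv Hi; rewrite dspread_int //.
  case Hn: (odd n); first by rewrite subr0.
  have := Hv n.+1 (leqnn _); rewrite /dspread.
  have -> : odd n.+1 = true by lia.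
  have -> : (n.+1)./2 = n./2 by lia.
  by move=> ->; rewrite subr0.
rewrite big_geq //; case Ho: (odd i) => //.
by have := Hv i Hi; rewrite /dspread Ho.
Qed.

Lemma jmul_dspread n c b : vanish n (dspread c) ->
  jmul n (dspread c) b = dspread (fun j => c j * tl n b j.*2.+1).
Proof.
move=> Hv; apply: funext => i; rewrite /jmul /ofdiff !tl_dspread //.
rewrite /dspread; case Ho: (odd i).
  have -> : odd i.+1 = false by lia.
  rewrite mul0r subr0.
  by have -> : (i./2).*2.+1 = i by lia.
have -> : odd i.+1 = true by lia.
rewrite mul0r sub0r.
have -> : (i./2).*2.+1 = i.+1 by lia.
by have -> : (i.+1)./2 = i./2 by lia.
Qed.

Lemma jmul_dspread2 n c c' : vanish n (dspread c) -> vanish n (dspread c') ->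
  jmul n (dspread c) (dspread c') = dspread (fun i => c i * c' i).
Proof.
move=> Hv Hv'; rewrite jmul_dspread //; congr dspread; apply: funext => j.
rewrite tl_dspread //; have -> : odd j.*2.+1 = true by lia.
by have -> : (j.*2.+1)./2 = j by lia.
Qed.

Lemma tl_espread m a i : tl m.*2 (espread a) i = tl m a (i.+1)./2.
Proof.
rewrite /tl; case: (leqP i m.*2) => Hi.
  rewrite espread_int //; by have -> : (m.*2.+1)./2 = m by lia.
by rewrite !big_geq //; lia.
Qed.

Lemma jmul_espread m a b : jmul m.*2 (espread a) (espread b) = espread (jmul m a b).
Proof.
apply: funext => i; rewrite /jmul /ofdiff !tl_espread /espread; case Ho: (odd i).
  have -> : (i.+2)./2 = (i.+1)./2 by lia.
  by rewrite subrr.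
have -> : (i.+1)./2 = i./2 by lia.
by have -> : (i.+2)./2 = (i./2).+1 by lia.
Qed.

End Alg.

Local Open Scope classical_set_scope.

Section Dual.
Variable R : realType.
Variable N : (nat -> R) -> R.
Hypothesis HN : normalized_1uncond N.

Lemma dual_ub (b : nat -> R) (B : R) : (forall n a, vanish n a -> N a <= 1 -> \sum_(i < n) b i * a i <= B) ->
  dualnorm N b <= B.
Proof.
move=> H; apply: ge_sup.
  exists 0; exists 0%N, (fun _ => 0); split => //; split; last by rewrite big_ord0.
  by rewrite (N0 HN) ler01.
by move=> r [n [a [Ha [Hj ->]]]]; apply: H.
Qed.

Lemma dual_lb (b : nat -> R) n (a : nat -> R) : fsupp b -> vanish n a -> N a <= 1 -> \sum_(i < n) b i * a i <= dualnorm N b.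
Proof.
case=> nb Hb Ha Hj; apply: ub_le_sup; last by exists n, a.
exists (\sum_(i < nb) `|b i|) => r [n' [a' [Ha' [Hj' ->]]]] /=.
have Hfa' : fsupp a' by exists n'.
apply: le_trans (ler_norm _) _.
apply: le_trans (ler_norm_sum _ _ _) _.
apply: (@le_trans _ _ (\sum_(i < n') `|b i|)).
  apply: ler_sum => i _; rewrite normrM -[X in _ <= X]mulr1; apply: ler_wpM2l => //.
  apply: le_trans Hj'; exact: N_coord.
rewrite -(@sum_widen _ nb (nb + n')%N (fun i => `|b i|)); last by apply: leq_addr.
  by apply: (@sum_mono _ n' (nb + n')%N (fun i => `|b i|)) => //; apply: leq_addl.
by move=> i Hi; rewrite Hb ?normr0.
Qed.

Lemma dual_ge0 (b : nat -> R) : fsupp b -> 0 <= dualnorm N b.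
Proof.
move=> Hb; have := @dual_lb b 0%N (fun _ => 0) Hb (fun _ _ => erefl) _.
by rewrite big_ord0 (N0 HN) ler01; apply.
Qed.

Lemma Jsnorm_ge0 (f : R * (nat -> R)) : fsupp f.2 -> 0 <= Jsnorm N f.
Proof.
move=> Hf; have := @Jsnorm_lb R N HN f 0%N (fun _ => 0) Hf (fun _ _ => erefl).
by rewrite big_ord0; apply; apply: le_trans (Jnorm0 HN) _; apply: ler01.
Qed.

End Dual.

Section Final.
Variable R : realType.
Variable N : (nat -> R) -> R.
Hypothesis HN : normalized_1uncond N.
Variable C : R.
Hypothesis HC0 : 0 < C.
Hypothesis HC : RDC N C.
Let HW := W_norm HN.
Let HC0' := ltW HC0.
Let K := 1 + (C + C) + (C + C).
Let JW := Jnorm (Wnorm N).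

Lemma K_gt0 : 0 < K.
Proof. rewrite /K; have := HC0; lra. Qed.
Lemma K_ge1 : 1 <= K.
Proof. rewrite /K; have := HC0; lra. Qed.

Lemma JW_Q (a : nat -> R) : fsupp a -> JW (Qop a) <= K * JW a.
Proof.
move=> Ha; rewrite /Qop /JW; apply: le_trans (Jw_dspread HN HC0' HC (fsupp_odd Ha)) _.
apply: ler_wpM2l; first by apply: ltW; apply: K_gt0.
exact: Jw_odd.
Qed.

Lemma fsuppQ (a : nat -> R) : fsupp a -> fsupp (Qop a).
Proof. by move=> Ha; apply: fsupp_dspread; apply: fsupp_odd. Qed.

Lemma JW_pair (a : nat -> R) : fsupp a -> JW a <= 1 -> JW (espread (fun i => a i.*2 + a i.*2.+1)) <= 1 + K.
Proof.
move=> Ha Hj; rewrite -IQ; apply: le_trans (Jnorm_sub HW Ha (fsuppQ Ha)) _.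
apply: lerD => //; apply: le_trans (JW_Q Ha) _.
rewrite -[X in _ <= X]mulr1; apply: ler_wpM2l => //; apply: ltW; apply: K_gt0.
Qed.

End Final.

Local Open Scope classical_set_scope.

Section Final2.
Variable R : realType.
Variable N : (nat -> R) -> R.
Hypothesis HN : normalized_1uncond N.
Variable C : R.
Hypothesis HC0 : 0 < C.
Hypothesis HC : RDC N C.
Let HW := W_norm HN.
Let HC0' := ltW HC0.
Let K := 1 + (C + C) + (C + C).
Let JW := Jnorm (Wnorm N).
Let HK : 0 < K := K_gt0 HC0.
Let HK0 : K != 0 := lt0r_neq0 HK.

Lemma Rbound (f : R * (nat -> R)) : fsupp f.2 -> Jsnorm (Wnorm N) (Rop f) <= K * Jsnorm (Wnorm N) f.
Proof.
move=> Hf; apply: (Jsnorm_ub HW) => n a Ha Hj.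
have Hfa : fsupp a by exists n.
pose c := fun i => K^-1 * a i.*2.+1.
have Hvc : vanish n c by move=> i Hi; rewrite /c Ha ?mulr0 //; lia.
have Hx : JW (dspread c) <= 1.
  apply: le_trans (Jw_dspread HN HC0' HC (fsupp_vanish Hvc)) _.
  rewrite /c (N_scale HN); last exact: fsupp_odd Hfa.
  rewrite ger0_norm; last by rewrite invr_ge0 ltW.
  rewrite mulrA mulfV // mul1r; apply: le_trans Hj; exact: Jw_odd.
have Hlb := Jsnorm_lb HW (n := n.*2) Hf (vanish_dspread Hvc) Hx.
have E : \sum_(i < n) ((Rop f).1 + (Rop f).2 i) * a i =
   K * \sum_(i < n.*2) (f.1 + f.2 i) * dspread c i.
  rewrite (sum_pairs_v (fun i => (Rop f).1 + (Rop f).2 i) Ha).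
  rewrite (sum_pairs n (fun i => (f.1 + f.2 i) * dspread c i)) mulr_sumr; apply: eq_bigr => j _.
  rewrite dspread_odd dspread_even /c /Rop /fev.
  rewrite /=.
  have -> : odd j.*2 = false by lia.
  rewrite /=.
  field.
  by [].
rewrite E; apply: ler_wpM2l => //; exact: ltW.
Qed.

Lemma fsupp_oddspread (b : nat -> R) : fsupp b -> fsupp (oddspread b).
Proof. case=> n Hn; exists n.*2 => i Hi; rewrite /oddspread Hn; [by case: ifP|lia]. Qed.

Lemma fsupp_pairspread (b : nat -> R) : fsupp b -> fsupp (pairspread b).
Proof. case=> n Hn; exists n.*2 => i Hi; rewrite /pairspread Hn //; lia. Qed.

Let HK1 : 0 < 1 + K.
Proof. by have := HK; lra. Qed.
Let HK10 : 1 + K != 0 := lt0r_neq0 HK1.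

Lemma Sbound (f : R * (nat -> R)) : fsupp f.2 -> Jsnorm (Wnorm N) (Sop f) <= (1 + K) * Jsnorm (Wnorm N) f.
Proof.
move=> Hf; apply: (Jsnorm_ub HW) => n a Ha Hj.
have Hfa : fsupp a by exists n.
pose y := fun j => (1 + K)^-1 * (a j.*2 + a j.*2.+1).
have Hvy : vanish n y by move=> i Hi; rewrite /y !Ha ?addr0 ?mulr0 //; lia.
have Hx : JW (espread y) <= 1.
  have -> : espread y = (fun i => (1 + K)^-1 * espread (fun j => a j.*2 + a j.*2.+1) i).
    by apply: funext => i; rewrite /espread /y; case: odd; rewrite ?mulr0.
  apply: le_trans (Jnorm_scale HW _ (fsupp_espread (fsuppD (fsupp_even Hfa) (fsupp_odd Hfa)))) _.
  rewrite ger0_norm; last by rewrite invr_ge0 ltW.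
  apply: (@le_trans _ _ ((1 + K)^-1 * (1 + K))); last by rewrite mulVf.
  apply: ler_wpM2l; first by rewrite invr_ge0 ltW.
  exact: (JW_pair HN HC0 HC).
have Hlb := Jsnorm_lb HW (n := n.*2) Hf (vanish_espread Hvy) Hx.
have E : \sum_(i < n) ((Sop f).1 + (Sop f).2 i) * a i =
   (1 + K) * \sum_(i < n.*2) (f.1 + f.2 i) * espread y i.
  rewrite (sum_pairs_v (fun i => (Sop f).1 + (Sop f).2 i) Ha).
  rewrite (sum_pairs n (fun i => (f.1 + f.2 i) * espread y i)) mulr_sumr; apply: eq_bigr => j _.
  rewrite espread_odd espread_even /y /Sop /=.
  have -> : ((j.*2)./2).*2 = j.*2 by lia.
  have -> : ((j.*2.+1)./2).*2 = j.*2 by lia.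
  field.
  by [].
rewrite E; apply: ler_wpM2l => //; exact: ltW.
Qed.

Lemma dual_equiv (b : nat -> R) : fsupp b ->
  Jsnorm (Wnorm N) (0, oddspread b) <= dualnorm N b /\ dualnorm N b <= K * Jsnorm (Wnorm N) (0, oddspread b).
Proof.
move=> Hb; split.
  apply: (Jsnorm_ub HW) => n a Ha Hj.
  have Hfa : fsupp a by exists n.
  have E : \sum_(i < n) (((0:R), oddspread b).1 + ((0:R), oddspread b).2 i) * a i = \sum_(j < n) b j * a j.*2.+1.
    rewrite (sum_pairs_v (fun i => ((0:R), oddspread b).1 + ((0:R), oddspread b).2 i) Ha).
    by apply: eq_bigr => j _; rewrite /= oddspread_even oddspread_odd !add0r mul0r add0r.
  rewrite E; apply: (dual_lb HN (n := n) (a := fun j => a j.*2.+1) Hb).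
    by move=> i Hi; rewrite Ha //; lia.
  apply: le_trans Hj; exact: Jw_odd.
apply: (dual_ub HN) => n a' Ha' HNa'.
have Hfa' : fsupp a' by exists n.
pose c := fun i => K^-1 * a' i.
have Hvc : vanish n c by move=> i Hi; rewrite /c Ha' ?mulr0.
have Hx : JW (dspread c) <= 1.
  apply: le_trans (Jw_dspread HN HC0' HC (fsupp_vanish Hvc)) _.
  rewrite /c (N_scale HN) // ger0_norm; last by rewrite invr_ge0 ltW.
  by rewrite mulrA mulfV // mul1r.
have Hlb := Jsnorm_lb HW (f := (0, oddspread b)) (n := n.*2) (fsupp_oddspread Hb) (vanish_dspread Hvc) Hx.
have E : \sum_(i < n) b i * a' i =
   K * \sum_(i < n.*2) (((0:R), oddspread b).1 + ((0:R), oddspread b).2 i) * dspread c i.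
  rewrite (sum_pairs n (fun i => (((0:R), oddspread b).1 + ((0:R), oddspread b).2 i) * dspread c i)).
  rewrite mulr_sumr; apply: eq_bigr => j _.
  rewrite /= oddspread_even oddspread_odd dspread_even dspread_odd /c.
  field.
  by [].
rewrite E; apply: ler_wpM2l => //; exact: ltW.
Qed.

Let K2 := 1 + (C + C).
Let HK2 : 0 < K2.
Proof. by rewrite /K2; have := HC0; lra. Qed.
Let HK20 : K2 != 0 := lt0r_neq0 HK2.

Lemma iv_equiv (t : R) (b : nat -> R) : fsupp b ->
  Jsnorm (Wnorm N) (t, pairspread b) <= (1 + K) * Jsnorm N (t, b) /\
  Jsnorm N (t, b) <= K2 * Jsnorm (Wnorm N) (t, pairspread b).
Proof.
move=> Hb; split.
  apply: (Jsnorm_ub HW) => n a Ha Hj.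
  have Hfa : fsupp a by exists n.
  pose y := fun j => (1 + K)^-1 * (a j.*2 + a j.*2.+1).
  have Hvy : vanish n y by move=> i Hi; rewrite /y !Ha ?addr0 ?mulr0 //; lia.
  have Hfd : fsupp (fun j => a j.*2 + a j.*2.+1) by apply: fsuppD; [apply: fsupp_even|apply: fsupp_odd].
  have Hy : Jnorm N y <= 1.
    apply: le_trans (Jnorm_scale HN _ Hfd) _.
    rewrite ger0_norm; last by rewrite invr_ge0 ltW.
    apply: (@le_trans _ _ ((1 + K)^-1 * (1 + K))); last by rewrite mulVf.
  apply: ler_wpM2l; first by rewrite invr_ge0 ltW.
    apply: le_trans (JN_espread HN HC0' Hfd) _; exact: (JW_pair HN HC0 HC).
  have Hlb := Jsnorm_lb HN (f := (t, b)) (n := n) Hb Hvy Hy.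
  have E : \sum_(i < n) ((t, pairspread b).1 + (t, pairspread b).2 i) * a i =
     (1 + K) * \sum_(j < n) ((t, b).1 + (t, b).2 j) * y j.
    rewrite (sum_pairs_v (fun i => (t, pairspread b).1 + (t, pairspread b).2 i) Ha).
    rewrite mulr_sumr; apply: eq_bigr => j _.
    rewrite /= pairspread_even pairspread_odd /y.
    field.
    by [].
  rewrite E; apply: ler_wpM2l => //; exact: ltW.
apply: (Jsnorm_ub HN) => n d Hd Hj.
have Hfd : fsupp d by exists n.
pose y := fun j => K2^-1 * d j.
have Hvy : vanish n y by move=> i Hi; rewrite /y Hd ?mulr0.
have Hx : JW (espread y) <= 1.
  apply: le_trans (Jw_espread HN HC0' HC (fsupp_vanish Hvy)) _.
  apply: le_trans (_ : K2 * (`|K2^-1| * Jnorm N d) <= 1).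
    apply: ler_wpM2l; first exact: ltW.
    exact: (Jnorm_scale HN _ Hfd).
  rewrite ger0_norm; last by rewrite invr_ge0 ltW.
  by rewrite mulrA mulfV // mul1r.
have Hlb := Jsnorm_lb HW (f := (t, pairspread b)) (n := n.*2) (fsupp_pairspread Hb) (vanish_espread Hvy) Hx.
have E : \sum_(i < n) ((t, b).1 + (t, b).2 i) * d i =
   K2 * \sum_(i < n.*2) ((t, pairspread b).1 + (t, pairspread b).2 i) * espread y i.
  rewrite (sum_pairs n (fun i => ((t, pairspread b).1 + (t, pairspread b).2 i) * espread y i)).
  rewrite mulr_sumr; apply: eq_bigr => j _.
  rewrite /= pairspread_even pairspread_odd espread_even espread_odd /y.
  field.
  by [].
rewrite E; apply: ler_wpM2l => //; exact: ltW.
Qed.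

End Final2.

Local Close Scope classical_set_scope.
Unset Implicit Arguments. Set Strict Implicit. Set Printing Implicit Defensive.

Theorem proposition1p25 (R : realType) (N : (nat -> R) -> R)
  (HX : normalized_1uncond N) (Hrd : right_dominant N) :
  (* (i) (e_{2i}-e_{2i-1}) ~ (x_i), complemented by the bounded projection Q *)
  equiv_on (@fsupp R) N (fun c => Jnorm (Wnorm N) (dspread c)) /\
  (exists C : R, 0 < C /\ forall a : nat -> R, fsupp a ->
     Jnorm (Wnorm N) (Qop a) <= C * Jnorm (Wnorm N) a) /\
  (forall c : nat -> R, Qop (dspread c) = dspread c) /\
  (* (ii) (e_{2i-1}) ~ (e_i), complemented by I - Q *)
  equiv_on (@fsupp R) (Jnorm N) (fun c => Jnorm (Wnorm N) (espread c)) /\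
  (forall a : nat -> R, (fun k => a k - Qop a k) = espread (fun i => a i.*2 + a i.*2.+1)) /\
  (* X~ is an ideal of J(W), isomorphic as an algebra to X *)
  (forall n (c b : nat -> R), vanish n (dspread c) -> vanish n b ->
     exists c', jmul n (dspread c) b = dspread c') /\
  (forall n (c c' : nat -> R), vanish n (dspread c) -> vanish n (dspread c') ->
     jmul n (dspread c) (dspread c') = dspread (fun i => c i * c' i)) /\
  (* J(X)~ is a subalgebra of J(W), isomorphic as an algebra to J(X) *)
  (forall m (a b : nat -> R), vanish m a -> vanish m b ->
     jmul m.*2 (espread a) (espread b) = espread (jmul m a b)) /\
  (* J(W) = X~ (+) J(X)~ *)
  (forall c d : nat -> R, dspread c = espread d -> forall i, c i = 0 /\ d i = 0) /\
  (* (iii) (e_{2i}^* ) ~ (x_i^* ), complemented by the bounded projection R *)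
  equiv_on (@fsupp R) (dualnorm N) (fun b => Jsnorm (Wnorm N) (0, oddspread b)) /\
  (exists C : R, 0 < C /\ forall f : R * (nat -> R), fsupp f.2 ->
     Jsnorm (Wnorm N) (Rop f) <= C * Jsnorm (Wnorm N) f) /\
  (forall b : nat -> R, Rop (0, oddspread b) = (0, oddspread b)) /\
  (* (iv) (s)^(e_{2i-1}^* + e_{2i}^* ) ~ (s)^(e_i^* ), complemented by S *)
  (exists C : R, 0 < C /\ forall (t : R) (b : nat -> R), fsupp b ->
     Jsnorm (Wnorm N) (t, pairspread b) <= C * Jsnorm N (t, b) /\
     Jsnorm N (t, b) <= C * Jsnorm (Wnorm N) (t, pairspread b)) /\
  (exists C : R, 0 < C /\ forall f : R * (nat -> R), fsupp f.2 ->
     Jsnorm (Wnorm N) (Sop f) <= C * Jsnorm (Wnorm N) f) /\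
  (forall (t : R) (b : nat -> R), Sop (t, pairspread b) = (t, pairspread b)) /\
  (forall f : R * (nat -> R), Sop f = (f.1, pairspread (fun i => f.2 i.*2))) /\
  (* Y~ is an ideal of J_star(W), isomorphic as an algebra to Y *)
  (forall (b : nat -> R) (f : R * (nat -> R)), exists b', pmul (0, oddspread b) f = (0, oddspread b')) /\
  (forall b b' : nat -> R, pmul (0, oddspread b) (0, oddspread b')
                = (0, oddspread (fun i => b i * b' i))) /\
  (* J_star(X)~ is a subalgebra of J_star(W), isomorphic as an algebra to J_star(X) *)
  (forall (t t' : R) (b b' : nat -> R),
     pmul (t, pairspread b) (t', pairspread b')
     = ((pmul (t, b) (t', b')).1, pairspread (pmul (t, b) (t', b')).2)) /\
  (* J_star(W) = Y~ (+) J_star(X)~ *)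
  (forall f : R * (nat -> R), f.1 = (Rop f).1 + (Sop f).1 /\
             forall k, f.2 k = (Rop f).2 k + (Sop f).2 k) /\
  (forall (b : nat -> R) (t : R) (d : nat -> R), (0, oddspread b) = (t, pairspread d) ->
     t = 0 /\ forall i, b i = 0 /\ d i = 0).
Proof.
have [C [HC0 HC]] := Hrd.
have HC' : RDC N C := HC.
have HC0' := ltW HC0.
have HW := W_norm HX.
have HK := K_gt0 HC0.
have HK1 := K_ge1 HC0.
set K := 1 + (C + C) + (C + C) in HK HK1.
split.
  exists K; split => // c Hc; split.
    have h := Jw_odd HX (fsupp_dspread Hc).
    rewrite (N_ext N (b := c)) in h; last by move=> i; rewrite dspread_odd.
    apply: le_trans h _; rewrite -[X in X <= _]mul1r; apply: ler_wpM2r => //.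
    exact: (Jnorm_ge0 HW (fsupp_dspread Hc)).
  exact: (Jw_dspread HX HC0' HC' Hc).
split.
  by exists K; split => // a Ha; apply: (JW_Q HX HC0 HC').
split; first exact: Qop_dspread.
split.
  exists (1 + (C + C)); split; first by lra.
  move=> c Hc; split.
    apply: le_trans (JN_espread HX HC0' Hc) _; rewrite -[X in X <= _]mul1r; apply: ler_wpM2r; last by lra.
    exact: (Jnorm_ge0 HW (fsupp_espread Hc)).
  exact: (Jw_espread HX HC0' HC' Hc).
split; first exact: IQ.
split.
  by move=> n c b Hv _; eexists; apply: jmul_dspread.
split; first by move=> n c c' Hv Hv'; apply: jmul_dspread2.
split; first by move=> m a b _ _; apply: jmul_espread.
split.
  move=> c d E i; have h1 := f_equal (fun f => f i.*2.+1) E; have h2 := f_equal (fun f => f i.*2) E.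
  move: h1 h2 => /=; rewrite dspread_odd espread_odd dspread_even espread_even => h1 h2.
  by split => //; rewrite -h2 h1 oppr0.
split.
  exists K; split => // b Hb; have [h1 h2] := dual_equiv HX HC0 HC' Hb; split => //.
  apply: le_trans h1 _; rewrite -[X in X <= _]mul1r; apply: ler_wpM2r => //.
  exact: (dual_ge0 HX Hb).
split.
  by exists K; split => // f Hf; apply: (Rbound HX HC0 HC').
split.
  move=> b; rewrite /Rop; congr pair; apply: funext => k; rewrite /fev /oddspread /=.
  case Ho: (odd k) => //; rewrite (_ : odd k.-1 = false) ?add0r ?subr0 //; lia.
split.
  exists ((1 + K) + (1 + (C + C))); split; first by lra.
  move=> t b Hb; have [h1 h2] := iv_equiv HX HC0 HC' t Hb.
  have g1 := Jsnorm_ge0 HX (f := (t, b)) Hb.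
  have Hpb : fsupp (pairspread b).
    by case: Hb => n0 Hn; exists n0.*2 => i Hi; rewrite /pairspread Hn //; lia.
  have g2 := Jsnorm_ge0 HW (f := (t, pairspread b)) Hpb.
  split.
    apply: le_trans h1 _; apply: ler_wpM2r => //; rewrite /K; lra.
  apply: le_trans h2 _; apply: ler_wpM2r => //; rewrite /K; lra.
split.
  exists (1 + K); split; first by lra.
  by move=> f Hf; apply: (Sbound HX HC0 HC').
split.
  move=> t b; rewrite /Sop /=; congr pair; apply: funext => k; rewrite /pairspread.
  by have -> : ((k./2).*2)./2 = k./2 by lia.
split; first by case.
split.
  move=> b f; exists (fun j => b j * (f.1 + f.2 j.*2.+1)); rewrite /pmul /= mul0r.
  congr pair; apply: funext => i; rewrite /oddspread; case Ho: (odd i).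
    rewrite mul0r add0r; have -> : (i./2).*2.+1 = i by lia.
    by rewrite mulrDr.
  by rewrite !mul0r !addr0.
split.
  move=> b b'; rewrite /pmul /= mul0r; congr pair; apply: funext => i; rewrite /oddspread.
  by case: (odd i); rewrite ?mul0r ?mulr0 ?add0r.
split; first by [].
split.
  move=> f; split; first by rewrite /Rop /Sop /= add0r.
  move=> k; rewrite /Rop /Sop /fev /=; case Ho: (odd k).
    have -> : (k./2).*2 = k.-1 by lia.
    lra.
  have -> : (k./2).*2 = k by lia.
  by rewrite add0r.
move=> b t d E; case: E => Et Ed; split => // i.
have h1 := f_equal (fun f => f i.*2.+1) Ed; have h2 := f_equal (fun f => f i.*2) Ed.
move: h1 h2 => /=; rewrite oddspread_odd pairspread_odd oddspread_even pairspread_even => h1 h2.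
by rewrite h1 -h2.
Qed.
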